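(* Let $N=\{p\in(\mathbf{R}^3)^4: p_4=0,\ \|p\|=1\}$ (the space of tetrahedra $p=(p_1,p_2,p_3,p_4)$ modulo translation and positive scaling) and let $Y$ be the vector field on $N$ given by $Y_p=D(\pi)_p(\nabla\operatorname{vol}_p)$, where $\operatorname{vol}(p)=\frac16((p_2-p_1)\times(p_3-p_1))\cdot(p_4-p_1)$. If $p\in N$ is a singularity of $Y$ (i.e. $Y_p=0$) and $p_1,p_2,p_3,p_4$ are not collinear, then $p$ is a regular tetrahedron, i.e. all six distances $\|p_i-p_j\|$, $i\neq j$, are equal.
   Context: $\tau(p_1,\ldots,p_4)=(p_1-p_4,p_2-p_4,p_3-p_4,0)$, $\sigma(p)=p/\|p\|$, $\pi=\sigma\circ\tau$, defined on $(\mathbf{R}^3)^4$ minus the configurations with all $p_i$ equal; $D(\pi)$ is its differential and $\nabla$ is the Euclidean gradient on $\mathbf{R}^{12}$. *)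

(* Defs.v *)
From HB Require Import structures.
From mathcomp Require Import all_boot all_order all_algebra.
From mathcomp Require Import all_classical all_reals all_analysis.
Set Implicit Arguments. Unset Strict Implicit. Unset Printing Implicit Defensive.
Import Order.TTheory GRing.Theory Num.Theory.
Import numFieldNormedType.Exports.
Local Open Scope ring_scope.

(* A configuration (p_1,...,p_4) in (R^3)^4 is a 4x3 real matrix; row i is
   the point p_{i+1}.  Index 0..3 in Rocq corresponds to 1..4 in the paper. *)
Definition config (R : realType) := 'M[R]_(4, 3).

Definition pt {R : realType} (p : config R) (i : nat) : 'rV[R]_3 := row (inord i) p.

(* Euclidean norm on R^12 = (R^3)^4 and Euclidean distance in R^3.
   (The normed-space norm of mathcomp-analysis on matrices is the max norm,
   which is only used implicitly for the topology/derivative.) *)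
Definition enorm {R : realType} (p : config R) : R :=
  Num.sqrt (\sum_(i < 4) \sum_(k < 3) p i k ^+ 2).

Definition dist3 {R : realType} (x y : 'rV[R]_3) : R :=
  Num.sqrt (\sum_(k < 3) (x ord0 k - y ord0 k) ^+ 2).

Definition dot3 {R : realType} (x y : 'rV[R]_3) : R :=
  \sum_(k < 3) x ord0 k * y ord0 k.

Definition cross3 {R : realType} (x y : 'rV[R]_3) : 'rV[R]_3 :=
  \row_(k < 3)
    (if k == 0 :> nat then x ord0 (inord 1) * y ord0 (inord 2) - x ord0 (inord 2) * y ord0 (inord 1)
     else if k == 1 :> nat then x ord0 (inord 2) * y ord0 (inord 0) - x ord0 (inord 0) * y ord0 (inord 2)
     else x ord0 (inord 0) * y ord0 (inord 1) - x ord0 (inord 1) * y ord0 (inord 0)).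

Definition tau {R : realType} (p : config R) : config R :=
  \matrix_(i < 4, k < 3) (p i k - p (inord 3) k).

Definition sigma {R : realType} (p : config R) : config R := (enorm p)^-1 *: p.

Definition piN {R : realType} (p : config R) : config R := sigma (tau p).

Definition vol {R : realType} (p : config R) : R :=
  6^-1 * dot3 (cross3 (pt p 1 - pt p 0) (pt p 2 - pt p 0)) (pt p 3 - pt p 0).

Definition grad {R : realType} (f : config R -> R) (p : config R) : config R :=
  \matrix_(i < 4, k < 3) ('D_(delta_mx i k) f p).

Definition Yfield {R : realType} (p : config R) : config R :=
  'D_(grad vol p) piN p.

Definition inN {R : realType} (p : config R) : Prop :=
  pt p 3 = 0 /\ enorm p = 1.

Definition collinear {R : realType} (p : config R) : Prop :=
  exists a d : 'rV[R]_3, forall i : nat, (i < 4)%N -> exists t : R, pt p i = a + t *: d.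

Definition regular_tetra {R : realType} (p : config R) : Prop :=
  forall i j k l : nat, (i < 4)%N -> (j < 4)%N -> (k < 4)%N -> (l < 4)%N ->
    i <> j -> k <> l -> dist3 (pt p i) (pt p j) = dist3 (pt p k) (pt p l).

(* Main.v *)
Require Import Defs.
From HB Require Import structures.
From mathcomp Require Import all_boot all_order all_algebra.
From mathcomp Require Import all_classical all_reals all_analysis.
From mathcomp Require Import ring lra.
Import Order.TTheory GRing.Theory Num.Theory.
Import numFieldNormedType.Exports.
Local Open Scope classical_set_scope.
Local Open Scope ring_scope.

Section S.
Variable R : realType.

Lemma derive_line (V W : normedModType R) (f : V -> W) (a v : V) :
  'D_v f a = 'D_1 (fun h : R => f (a + h *: v)) 0.
Proof.
rewrite /derive.
suff -> : (fun h : R => h^-1 *: (((fun h0 : R => f (a + h0 *: v)) \o shift 0) h%:A - f (a + 0 *: v))) = (fun h => h^-1 *: ((f \o shift a) (h *: v) - f a)) by [].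
apply: funext => h /=; rewrite scale0r !addr0.
have -> : h%:A = h :> R by exact: mulr1.
by rewrite [a + _]addrC.
Qed.

Lemma cvg_of_is_derive {V W : normedModType R} {f : V -> W} {x v df} :
  is_derive x v f df ->
  (fun h => h^-1 *: ((f \o shift x) (h *: v) - f x)) @ 0^' --> df.
Proof. by case=> d <-; exact: d. Qed.

Lemma is_derive_scalv {V W : normedModType R} (f : V -> R) (c : W) x v df :
  is_derive x v f df -> is_derive x v (fun y => f y *: c) (df *: c).
Proof.
move=> H; have C := cvg_of_is_derive H.
have E : (fun h : R => h^-1 *: (((fun y => f y *: c) \o shift x) (h *: v) - f x *: c))
   = (fun h => (h^-1 *: ((f \o shift x) (h *: v) - f x)) *: c).
  by apply: funext => h /=; rewrite -scalerBl scalerA.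
have C2 : (fun h : R => h^-1 *: (((fun y => f y *: c) \o shift x) (h *: v) - f x *: c)) @ 0^' --> df *: c.
  by rewrite E; apply: cvgZr_tmp.
apply: DeriveDef; first by apply/cvg_ex; exists (df *: c).
exact: cvg_lim C2.
Qed.

Definition qf (c d : R) (h : R) : R := 1 + h * (2 * c) + h ^+ 2 * d.

Lemma qf_deriv (c d : R) : is_derive (0:R) 1 (qf c d) (2 * c).
Proof.
have H1 := @is_derive_scalv R R (fun y => y) (2 * c) 0 1 1 (is_derive_id _ _).
have H0 : is_derive (0:R) 1 (fun y : R => y ^+ 2) 0.
  have := @is_deriveX R R (fun y : R => y) 2 0 1 1 (is_derive_id _ _).
  by rewrite expr1 mulr0 scale0r.
have H2 := @is_derive_scalv R R (fun y => y ^+ 2) d 0 1 0 H0.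
have H3 := is_deriveD (is_derive_cst (1:R) (0:R) 1) (is_deriveD H1 H2).
have -> : qf c d = cst 1 + ((fun y : R => y *: (2 * c)) + (fun y : R => y ^+ 2 *: d)).
  by apply: funext => y; rewrite /qf /= addrA.
move: H3; rewrite add0r scale0r addr0.
by rewrite [1 *: _]mul1r.
Qed.

Definition sf (c d : R) (h : R) : R := (Num.sqrt (qf c d h))^-1.

Lemma sf_deriv (c d : R) : is_derive (0:R) 1 (sf c d) (- c).
Proof.
have q0 : qf c d 0 = 1 by rewrite /qf mul0r expr0n /= mul0r !addr0.
have Hs : is_derive (qf c d 0) 1 Num.sqrt (2 * Num.sqrt (qf c d 0))^-1.
  by apply: is_derive1_sqrt; rewrite q0.
have Hc := is_derive1_comp Hs (qf_deriv c d).
have nz : (Num.sqrt \o qf c d) 0 != 0 by rewrite /= q0 sqrtr1 oner_neq0.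
have := is_deriveV nz Hc.
rewrite /= q0 sqrtr1 expr1n invr1 mulr1.
have -> : (fun y => (Num.sqrt (qf c d y))^-1) = sf c d by [].
move=> H; apply: is_derive_eq H _.
rewrite scaleN1r mulrA mulVf ?mul1r //.

Qed.

Lemma tsf_deriv (c d : R) : is_derive (0:R) 1 (fun h => h * sf c d h) 1.
Proof.
have q0 : sf c d 0 = 1 by rewrite /sf /qf mul0r expr0n /= mul0r !addr0 sqrtr1 invr1.
have := is_deriveM (is_derive_id (0:R) 1) (sf_deriv c d).
rewrite q0 /= scale0r add0r => H; apply: is_derive_eq H _.
exact: mulr1.
Qed.

Lemma tau_lin (p g : config R) (h : R) : tau (p + h *: g) = tau p + h *: tau g.
Proof. by apply/matrixP => i k; rewrite !mxE; ring. Qed.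

Lemma tau_fix (p : config R) : pt p 3 = 0 -> tau p = p.
Proof.
move=> H; apply/matrixP => i k; rewrite !mxE.
have := congr1 (fun M : 'rV[R]_3 => M ord0 k) H; rewrite /pt !mxE => ->.
by rewrite subr0.
Qed.

Definition sumsq (p : config R) := \sum_(i < 4) \sum_(k < 3) p i k ^+ 2.
Definition ip (p w : config R) := \sum_(i < 4) \sum_(k < 3) p i k * w i k.

Lemma sumsq_line (p w : config R) h :
  sumsq (p + h *: w) = sumsq p + h * (2 * ip p w) + h ^+ 2 * sumsq w.
Proof.
rewrite /sumsq /ip !mulr_sumr -!big_split /=; apply: eq_bigr => i _.
rewrite !mulr_sumr -!big_split /=; apply: eq_bigr => k _.
by rewrite !mxE; ring.
Qed.

Lemma enorm1 (p : config R) : enorm p = 1 -> sumsq p = 1.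
Proof.
move=> H; have P : 0 <= sumsq p by apply: sumr_ge0 => i _; apply: sumr_ge0 => k _; exact: sqr_ge0.
by rewrite -(sqr_sqrtr P) -/(enorm p) H expr1n.
Qed.

Lemma piN_line (p g : config R) h : inN p ->
  piN (p + h *: g) = sf (ip p (tau g)) (sumsq (tau g)) h *: p
     + (h * sf (ip p (tau g)) (sumsq (tau g)) h) *: tau g.
Proof.
case=> H3 H1; rewrite /piN /sigma tau_lin tau_fix //.
rewrite /enorm -/(sumsq _) sumsq_line enorm1 // -/(qf _ _ _) -/(sf _ _ _).
by rewrite scalerDr scalerA mulrC.
Qed.

Lemma Dpi (p g : config R) : inN p ->
  'D_g piN p = tau g - ip p (tau g) *: p.
Proof.
move=> Hp; rewrite derive_line.
have -> : (fun h : R => piN (p + h *: g)) =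
   (fun h => sf (ip p (tau g)) (sumsq (tau g)) h *: p) +
   (fun h => (h * sf (ip p (tau g)) (sumsq (tau g)) h) *: tau g).
  by apply: funext => h; rewrite piN_line.
have := is_deriveD (is_derive_scalv _ p _ _ _ (sf_deriv (ip p (tau g)) (sumsq (tau g))))
                   (is_derive_scalv _ (tau g) _ _ _ (tsf_deriv (ip p (tau g)) (sumsq (tau g)))).
move=> H; rewrite (@derive_val _ _ _ _ _ _ _ H).
by rewrite scale1r scaleNr addrC.
Qed.

Lemma sum3 (F : 'I_3 -> R) : \sum_(k < 3) F k = F (inord 0) + F (inord 1) + F (inord 2).
Proof.
rewrite !big_ord_recl big_ord0 addr0 addrA.
by congr (F _ + F _ + F _); apply: val_inj; rewrite /= inordK.
Qed.

Lemma sum4 (F : 'I_4 -> R) : \sum_(k < 4) F k = F (inord 0) + F (inord 1) + F (inord 2) + F (inord 3).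
Proof.
rewrite !big_ord_recl big_ord0 addr0 !addrA.
by congr (F _ + F _ + F _ + F _); apply: val_inj; rewrite /= inordK.
Qed.

Definition X (q : config R) (i k : nat) : R := q (inord i) (inord k).

Lemma vol_expand (q : config R) : vol q = 6^-1 *
  (((X q 1 1 - X q 0 1) * (X q 2 2 - X q 0 2) - (X q 1 2 - X q 0 2) * (X q 2 1 - X q 0 1)) * (X q 3 0 - X q 0 0)
 + ((X q 1 2 - X q 0 2) * (X q 2 0 - X q 0 0) - (X q 1 0 - X q 0 0) * (X q 2 2 - X q 0 2)) * (X q 3 1 - X q 0 1)
 + ((X q 1 0 - X q 0 0) * (X q 2 1 - X q 0 1) - (X q 1 1 - X q 0 1) * (X q 2 0 - X q 0 0)) * (X q 3 2 - X q 0 2)).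
Proof.
rewrite /vol /dot3 sum3 /cross3 /pt /X !mxE !inordK //=.
Qed.

Definition crs (u v : nat -> R) (k : nat) : R :=
  if k == 0%N then u 1%N * v 2%N - u 2%N * v 1%N
  else if k == 1%N then u 2%N * v 0%N - u 0%N * v 2%N
  else u 0%N * v 1%N - u 1%N * v 0%N.

Definition Gf (x : nat -> nat -> R) (i k : nat) : R :=
  let A := fun k => x 1%N k - x 0%N k in
  let B := fun k => x 2%N k - x 0%N k in
  let C := fun k => x 3%N k - x 0%N k in
  6^-1 * (if i == 1%N then crs B C k
  else if i == 2%N then crs C A k
  else if i == 3%N then crs A B k
  else - (crs B C k + crs C A k + crs A B k)).

Lemma eq_ord_inord n (i : 'I_n.+1) a : (a <= n)%N -> (i == inord a) = (val i == a).
Proof. by move=> H; rewrite -val_eqE /= inordK. Qed.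

Lemma Xline (q : config R) (i : 'I_4) (k : 'I_3) h a b : (a < 4)%N -> (b < 3)%N ->
  X (q + h *: delta_mx i k) a b = X q a b + h * ((val i == a) && (val k == b))%:R.
Proof.
by move=> Ha Hb; rewrite /X !mxE ![inord _ == _]eq_sym !eq_ord_inord.
Qed.

Lemma vol_line (q : config R) (i : 'I_4) (k : 'I_3) h :
  vol (q + h *: delta_mx i k) = vol q + h * Gf (X q) i k.
Proof.
rewrite !vol_expand !Xline // /Gf /crs.
case: i => [[|[|[|[|i]]]] Hi] //; case: k => [[|[|[|k]]] Hk] //=; ring.
Qed.

Definition D (x : nat -> nat -> R) i j :=
  (x i 0%N - x j 0%N) ^+ 2 + (x i 1%N - x j 1%N) ^+ 2 + (x i 2%N - x j 2%N) ^+ 2.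

Lemma Gsum (x : nat -> nat -> R) b : (b < 3)%N ->
  Gf x 0 b + Gf x 1 b + Gf x 2 b + Gf x 3 b = 0.
Proof. by case: b => [|[|[|b]]] //= _; rewrite /Gf /crs /=; ring. Qed.

Lemma Gorth (x : nat -> nat -> R) i j l : (i < 4)%N -> (j < 4)%N -> (l < 4)%N ->
  i != j -> i != l -> j != l ->
  Gf x i 0 * (x j 0%N - x l 0%N) + Gf x i 1 * (x j 1%N - x l 1%N) + Gf x i 2 * (x j 2%N - x l 2%N) = 0.
Proof.
case: i => [|[|[|[|i]]]] //; case: j => [|[|[|[|j]]]] //; case: l => [|[|[|[|l]]]] //= *;
  rewrite /Gf /crs /=; ring.
Qed.

Lemma alg_reg (x : nat -> nat -> R) (c : R) : c != 0 -> (forall b, x 3%N b = 0) ->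
  (forall a b, (a < 4)%N -> (b < 3)%N -> Gf x a b - Gf x 3 b = c * x a b) ->
  forall i j, (i < 4)%N -> (j < 4)%N -> i <> j -> D x i j = D x 0 1.
Proof.
move=> c0 x3 E i1 j1 Hi1 Hj1 ij1.
pose m b := (x 0%N b + x 1%N b + x 2%N b + x 3%N b) / 4.
have GQ a b : (a < 4)%N -> (b < 3)%N -> Gf x a b = c * (x a b - m b).
  move=> Ha Hb.
  have S := @Gsum x b Hb.
  have E0 := E 0%N b erefl Hb; have E1 := E 1%N b erefl Hb;
  have E2 := E 2%N b erefl Hb; have Ea := E a b Ha Hb.
  have X3 := x3 b.
  rewrite /m x3 addr0; lra.
have O i j l : (i < 4)%N -> (j < 4)%N -> (l < 4)%N -> i != j -> i != l -> j != l ->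
   (x i 0%N - m 0%N) * (x j 0%N - x l 0%N) + (x i 1%N - m 1%N) * (x j 1%N - x l 1%N)
   + (x i 2%N - m 2%N) * (x j 2%N - x l 2%N) = 0.
  move=> Hi Hj Hl ij il jl; have := @Gorth x i j l Hi Hj Hl ij il jl.
  rewrite !GQ // -!mulrA -!mulrDr => /eqP; rewrite mulf_eq0 (negbTE c0) /= => /eqP //.
have O012 := O 0%N 1%N 2%N erefl erefl erefl erefl erefl erefl.
have O013 := O 0%N 1%N 3%N erefl erefl erefl erefl erefl erefl.
have O023 := O 0%N 2%N 3%N erefl erefl erefl erefl erefl erefl.
have O102 := O 1%N 0%N 2%N erefl erefl erefl erefl erefl erefl.
have O103 := O 1%N 0%N 3%N erefl erefl erefl erefl erefl erefl.
have O123 := O 1%N 2%N 3%N erefl erefl erefl erefl erefl erefl.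
have O201 := O 2%N 0%N 1%N erefl erefl erefl erefl erefl erefl.
have O203 := O 2%N 0%N 3%N erefl erefl erefl erefl erefl erefl.
have O213 := O 2%N 1%N 3%N erefl erefl erefl erefl erefl erefl.
have O301 := O 3%N 0%N 1%N erefl erefl erefl erefl erefl erefl.
have O302 := O 3%N 0%N 2%N erefl erefl erefl erefl erefl erefl.
have O312 := O 3%N 1%N 2%N erefl erefl erefl erefl erefl erefl.
move: O012 O013 O023 O102 O103 O123 O201 O203 O213 O301 O302 O312.
rewrite /m !x3 => *.
move: i1 j1 Hi1 Hj1 ij1; case=> [|[|[|[|i]]]] //; case=> [|[|[|[|j]]]] //= *; rewrite /D ?x3; lra.
Qed.

Lemma grad_vol (p : config R) : grad vol p = \matrix_(i < 4, k < 3) Gf (X p) i k.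
Proof.
apply/matrixP => i k; rewrite !mxE derive_line.
have -> : (fun h : R => vol (p + h *: delta_mx i k)) =
   cst (vol p) + (fun h => h *: Gf (X p) i k).
  by apply: funext => h; rewrite vol_line.
have H := is_deriveD (is_derive_cst (vol p) (0:R) 1)
   (is_derive_scalv _ (Gf (X p) i k) _ _ _ (is_derive_id (0:R) 1)).
by rewrite (@derive_val _ _ _ _ _ _ _ H) add0r scale1r.
Qed.

Definition dotf (u v : nat -> R) := u 0%N * v 0%N + u 1%N * v 1%N + u 2%N * v 2%N.

Lemma par (u v : nat -> R) : dotf u u != 0 ->
  crs u v 0 = 0 -> crs u v 1 = 0 -> crs u v 2 = 0 ->
  forall b, (b < 3)%N -> v b = (dotf u v / dotf u u) * u b.
Proof.
rewrite /crs /= => uu c0 c1 c2 b Hb.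
suff H : v b * dotf u u = dotf u v * u b by rewrite mulrAC -H mulfK.
apply/eqP; rewrite -subr_eq0; apply/eqP.
case: b Hb => [|[|[|b]]] // _; rewrite /dotf.
- have -> : v 0%N * (u 0%N * u 0%N + u 1%N * u 1%N + u 2%N * u 2%N) -
   (u 0%N * v 0%N + u 1%N * v 1%N + u 2%N * v 2%N) * u 0%N =
   u 2%N * (u 2%N * v 0%N - u 0%N * v 2%N) - u 1%N * (u 0%N * v 1%N - u 1%N * v 0%N) by ring.
  by rewrite c1 c2 !mulr0 subr0.
- have -> : v 1%N * (u 0%N * u 0%N + u 1%N * u 1%N + u 2%N * u 2%N) -
   (u 0%N * v 0%N + u 1%N * v 1%N + u 2%N * v 2%N) * u 1%N =
   u 0%N * (u 0%N * v 1%N - u 1%N * v 0%N) - u 2%N * (u 1%N * v 2%N - u 2%N * v 1%N) by ring.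
  by rewrite c0 c2 !mulr0 subr0.
- have -> : v 2%N * (u 0%N * u 0%N + u 1%N * u 1%N + u 2%N * u 2%N) -
   (u 0%N * v 0%N + u 1%N * v 1%N + u 2%N * v 2%N) * u 2%N =
   u 1%N * (u 1%N * v 2%N - u 2%N * v 1%N) - u 0%N * (u 2%N * v 0%N - u 0%N * v 2%N) by ring.
  by rewrite c0 c1 !mulr0 subr0.
Qed.
End S.

Arguments X {R}. Arguments crs {R}. Arguments dotf {R}. Arguments par {R u v}. Arguments Gf {R}. Arguments D {R}.
Section S2.
Variable R : realType.

Lemma pt_comb (p : config R) i j t :
  (forall b, (b < 3)%N -> X p i b = X p 0 b + t * (X p j b - X p 0 b)) ->
  pt p i = pt p 0 + t *: (pt p j - pt p 0).
Proof.
move=> H; apply/rowP => k; rewrite !mxE.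
by have := H (val k) (ltn_ord k); rewrite /X inord_val.
Qed.

Lemma crsN (u v : nat -> R) b : crs u v b = - crs v u b.
Proof. by rewrite /crs; case: ifP => _; [|case: ifP => _]; ring. Qed.

Lemma sq0 {a b c : R} : a * a + b * b + c * c = 0 -> a = 0 /\ b = 0 /\ c = 0.
Proof. move=> H; split; [|split]; nra. Qed.

Lemma coll_of (p : config R) :
  let A := fun b => X p 1 b - X p 0 b in
  let B := fun b => X p 2 b - X p 0 b in
  let C := fun b => X p 3 b - X p 0 b in
  (forall b, crs A B b = 0) -> (forall b, crs B C b = 0) -> (forall b, crs C A b = 0) ->
  collinear p.
Proof.
move=> A B C hAB hBC hCA.
have hAC b : crs A C b = 0 by rewrite crsN hCA oppr0.
have [AA|AA] := eqVneq (dotf A A) 0; last first.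
  exists (pt p 0), (pt p 1 - pt p 0) => i; case: i => [|[|[|[|i]]]] // _.
  - by exists 0; rewrite scale0r addr0.
  - by exists 1; rewrite scale1r addrC subrK.
  - exists (dotf A B / dotf A A); apply: pt_comb => b Hb.
    have := par AA (hAB 0) (hAB 1) (hAB 2) b Hb; rewrite /B /A => <-; ring.
  - exists (dotf A C / dotf A A); apply: pt_comb => b Hb.
    have := par AA (hAC 0) (hAC 1) (hAC 2) b Hb; rewrite /C /A => <-; ring.
have [A0 [A1 A2]] := sq0 (AA : A 0%N * A 0%N + A 1%N * A 1%N + A 2%N * A 2%N = 0).
have Az b : (b < 3)%N -> A b = 0 by case: b => [|[|[|b]]].
have [BB|BB] := eqVneq (dotf B B) 0; last first.
  exists (pt p 0), (pt p 2 - pt p 0) => i; case: i => [|[|[|[|i]]]] // _.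
  - by exists 0; rewrite scale0r addr0.
  - exists 0; apply: pt_comb => b Hb; have := Az b Hb; rewrite /A; lra.
  - by exists 1; rewrite scale1r addrC subrK.
  - exists (dotf B C / dotf B B); apply: pt_comb => b Hb.
    have := par BB (hBC 0) (hBC 1) (hBC 2) b Hb; rewrite /C /B => <-; ring.
have [B0 [B1 B2]] := sq0 (BB : B 0%N * B 0%N + B 1%N * B 1%N + B 2%N * B 2%N = 0).
have Bz b : (b < 3)%N -> B b = 0 by case: b => [|[|[|b]]].
exists (pt p 0), (pt p 3 - pt p 0) => i; case: i => [|[|[|[|i]]]] // _.
- by exists 0; rewrite scale0r addr0.
- exists 0; apply: pt_comb => b Hb; have := Az b Hb; rewrite /A; lra.
- exists 0; apply: pt_comb => b Hb; have := Bz b Hb; rewrite /B; lra.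
- by exists 1; rewrite scale1r addrC subrK.
Qed.
End S2.
Arguments coll_of {R}. Arguments ip {R}.
Arguments alg_reg {R}.
Arguments Dpi {R}.
Arguments grad_vol {R}.
Arguments Gsum {R}.

Lemma dist3E (R : realType) (p : config R) i j : dist3 (pt p i) (pt p j) = Num.sqrt (D (X p) i j).
Proof. by rewrite /dist3 sum3 /pt !mxE /D /X. Qed.

Lemma crs_hi (R : realType) (u v : nat -> R) b : crs u v b.+3 = crs u v 2.
Proof. by []. Qed.

Theorem mainTheorem6 (R : realType) (p : config R) :
  inN p -> Yfield p = 0 -> ~ collinear p -> regular_tetra p.
Proof.
move=> Hp HY Hnc.
have HY' : tau (grad vol p) - ip p (tau (grad vol p)) *: p = 0 by rewrite -Dpi.
move: HY'; set c := ip p _; rewrite grad_vol => HY'.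
have x3 b : X p 3 b = 0.
  have := congr1 (fun M : 'rV[R]_3 => M ord0 (inord b)) Hp.1.
  by rewrite /pt !mxE.
have E a b : (a < 4)%N -> (b < 3)%N -> Gf (X p) a b - Gf (X p) 3 b = c * X p a b.
  move=> Ha Hb; have := congr1 (fun M : config R => M (inord a) (inord b)) HY'.
  rewrite !mxE !inordK // => /eqP; rewrite subr_eq0 => /eqP.
  by [].
have [c0|c0] := eqVneq c 0.
  exfalso; apply: Hnc.
  have G0 a b : (a < 4)%N -> (b < 3)%N -> Gf (X p) a b = 0.
    move=> Ha Hb.
    have S := Gsum (X p) b Hb.
    have E0 := E 0%N b erefl Hb; have E1 := E 1%N b erefl Hb.
    have E2 := E 2%N b erefl Hb; have Ea := E a b Ha Hb.
    move: E0 E1 E2 Ea; rewrite c0 !mul0r => *; lra.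
  have inv6 : (6:R)^-1 != 0 by rewrite invr_eq0 pnatr_eq0.
  have Z i b : (i < 4)%N -> (b < 3)%N -> Gf (X p) i b = 0 ->
     (6:R)^-1 * (if i == 1%N then crs (fun k => X p 2 k - X p 0 k) (fun k => X p 3 k - X p 0 k) b
       else if i == 2%N then crs (fun k => X p 3 k - X p 0 k) (fun k => X p 1 k - X p 0 k) b
       else if i == 3%N then crs (fun k => X p 1 k - X p 0 k) (fun k => X p 2 k - X p 0 k) b
       else 0) = 0.
    move=> Hi Hb; rewrite /Gf /=.
    by case: i Hi => [|[|[|[|i]]]] //= _ _; rewrite mulr0.
  have W i b : (i < 4)%N -> (b < 3)%N -> (6:R)^-1 * (if i == 1%N then crs (fun k => X p 2 k - X p 0 k) (fun k => X p 3 k - X p 0 k) b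
       else if i == 2%N then crs (fun k => X p 3 k - X p 0 k) (fun k => X p 1 k - X p 0 k) b
       else if i == 3%N then crs (fun k => X p 1 k - X p 0 k) (fun k => X p 2 k - X p 0 k) b
       else 0) = 0.
    by move=> Hi Hb; apply: Z => //; apply: G0.
  apply: coll_of => b.
  - have H : forall b, (b < 3)%N -> crs (fun k => X p 1 k - X p 0 k) (fun k => X p 2 k - X p 0 k) b = 0.
      move=> b' Hb'; have := W 3%N b' erefl Hb'; rewrite /= => /eqP; rewrite mulf_eq0 (negbTE inv6) /= => /eqP //.
    by case: b => [|[|b]]; [apply: H|apply: H|rewrite -(H 2%N erefl)].
  - have H : forall b, (b < 3)%N -> crs (fun k => X p 2 k - X p 0 k) (fun k => X p 3 k - X p 0 k) b = 0.
      move=> b' Hb'; have := W 1%N b' erefl Hb'; rewrite /= => /eqP; rewrite mulf_eq0 (negbTE inv6) /= => /eqP //.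
    by case: b => [|[|b]]; [apply: H|apply: H|rewrite -(H 2%N erefl)].
  - have H : forall b, (b < 3)%N -> crs (fun k => X p 3 k - X p 0 k) (fun k => X p 1 k - X p 0 k) b = 0.
      move=> b' Hb'; have := W 2%N b' erefl Hb'; rewrite /= => /eqP; rewrite mulf_eq0 (negbTE inv6) /= => /eqP //.
    by case: b => [|[|b]]; [apply: H|apply: H|rewrite -(H 2%N erefl)].
move=> i j k l Hi Hj Hk Hl ij kl.
by rewrite !dist3E (alg_reg (X p) c c0 x3 E i j Hi Hj ij) (alg_reg (X p) c c0 x3 E k l Hk Hl kl).
Qed.
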